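(* Let $S$ be a set. Every structured set of $S$-probabilities is a $\vee$-specific set of $S$-probabilities, and every $\vee$-specific set of $S$-probabilities is a weakly structured set of $S$-probabilities; i.e. $\mathcal C_3\subseteq\mathcal C_2\subseteq\mathcal C_4$.
   Context: An $S$-probability is a function $p\colon S\to[0,1]$; sets $P$ of them are ordered pointwise, $0,1$ are constant functions, $p':=1-p$, sums are pointwise; $p\vee q$ denotes the supremum in $P$. $p\wedge q=0$ means the only $x\in P$ with $x\le p,q$ is $x=0$; $p\perp q$ means $p\le 1-q$. Conditions: (1) $0,1\in P$; (2) $p\in P\Rightarrow 1-p\in P$; (3) $p,q\in P$, $p\wedge q=0\Rightarrow p+q\in P$; (6) $p,q\in P$, $p\wedge q=0\Rightarrow p+q\in P$ and $p+q$ is the supremum $p\vee q$ in $P$; (7) $p,q,r\in P$, $p\perp q$, $q\perp r$, $p\wedge r=0\Rightarrow p+q+r\in P$; (8) $p,q,r\in P$, $p\perp q$, $q\perp r$, $p\wedge r=0\Rightarrow p+q+r\le 1$. $\mathcal C_1$: specific sets (satisfying (1),(2),(3)); $\mathcal C_2$: $\vee$-specific sets (specific sets satisfying (6)); $\mathcal C_3$: structured sets (satisfying (1),(2),(7)); $\mathcal C_4$: weakly structured sets (satisfying (1),(2),(8)). *)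

(* Defs.v *)
From Stdlib Require Import Reals.
Set Implicit Arguments.
Open Scope R_scope.

Section SProb.
Variable S : Type.

Definition sprob := S -> R.

Definition is_sprob (p : sprob) : Prop := forall s, 0 <= p s <= 1.

Definition is_sprob_set (P : sprob -> Prop) : Prop := forall p, P p -> is_sprob p.

Definition szero : sprob := fun _ => 0.
Definition sone : sprob := fun _ => 1.
Definition scompl (p : sprob) : sprob := fun s => 1 - p s.
Definition sadd (p q : sprob) : sprob := fun s => p s + q s.

Definition sle (p q : sprob) : Prop := forall s, p s <= q s.

(* p /\ q = 0 in P: the only x in P below p and q is 0 *)
Definition meet_zero (P : sprob -> Prop) (p q : sprob) : Prop :=
  forall x, P x -> sle x p -> sle x q -> x = szero.

Definition sperp (p q : sprob) : Prop := sle p (scompl q).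

Definition is_sup (P : sprob -> Prop) (r p q : sprob) : Prop :=
  P r /\ sle p r /\ sle q r /\
  (forall x, P x -> sle p x -> sle q x -> sle r x).

Definition cond1 (P : sprob -> Prop) : Prop := P szero /\ P sone.
Definition cond2 (P : sprob -> Prop) : Prop := forall p, P p -> P (scompl p).
Definition cond3 (P : sprob -> Prop) : Prop :=
  forall p q, P p -> P q -> meet_zero P p q -> P (sadd p q).
Definition cond6 (P : sprob -> Prop) : Prop :=
  forall p q, P p -> P q -> meet_zero P p q ->
    P (sadd p q) /\ is_sup P (sadd p q) p q.
Definition cond7 (P : sprob -> Prop) : Prop :=
  forall p q r, P p -> P q -> P r -> sperp p q -> sperp q r -> meet_zero P p r ->
    P (sadd (sadd p q) r).
Definition cond8 (P : sprob -> Prop) : Prop :=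
  forall p q r, P p -> P q -> P r -> sperp p q -> sperp q r -> meet_zero P p r ->
    sle (sadd (sadd p q) r) sone.

Definition specific (P : sprob -> Prop) : Prop :=
  is_sprob_set P /\ cond1 P /\ cond2 P /\ cond3 P.
Definition vee_specific (P : sprob -> Prop) : Prop :=
  specific P /\ cond6 P.
Definition structured (P : sprob -> Prop) : Prop :=
  is_sprob_set P /\ cond1 P /\ cond2 P /\ cond7 P.
Definition weakly_structured (P : sprob -> Prop) : Prop :=
  is_sprob_set P /\ cond1 P /\ cond2 P /\ cond8 P.

End SProb.

(* Main.v *)
Require Import Defs.
From Stdlib Require Import Reals Lra FunctionalExtensionality.

Theorem lemma3p1 (S : Type) (P : sprob S -> Prop) :
  (structured P -> vee_specific P) /\ (vee_specific P -> weakly_structured P).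
Proof.
  split.
  - intros [Hs [[H0 H1] [H2 H7]]].
    assert (Hadd : forall p q, P p -> P q -> meet_zero P p q -> P (sadd p q)).
    { intros p q Hp Hq Hm.
      assert (E : sadd p q = sadd (sadd p (@szero S)) q).
      { apply functional_extensionality; intro s; unfold sadd, szero; lra. }
      rewrite E. apply H7; auto.
      - intro s; unfold scompl, szero; specialize (Hs p Hp s); lra.
      - intro s; unfold scompl, szero; specialize (Hs q Hq s); simpl; lra. }
    split; [split; [exact Hs | split; [split; assumption | split; assumption]] |].
    intros p q Hp Hq Hm.
    split; [apply Hadd; auto|].
    split; [apply Hadd; auto|].
    split; [intro s; unfold sadd; specialize (Hs q Hq s); lra|].
    split; [intro s; unfold sadd; specialize (Hs p Hp s); lra|].
    intros x Hx Hpx Hqx s.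
    assert (HP : P (sadd (sadd p (scompl x)) q)).
    { apply H7; auto.
      - intro t; unfold scompl; specialize (Hpx t); lra.
      - intro t; unfold scompl; specialize (Hqx t); lra. }
    specialize (Hs _ HP s). unfold sadd, scompl in *. lra.
  - intros [[Hs [[H0 H1] [H2 H3]]] H6].
    split; [exact Hs|]. split; [split; assumption|]. split; [assumption|].
    intros p q r Hp Hq Hr Hpq Hqr Hm s.
    destruct (H6 p r Hp Hr Hm) as [_ [_ [_ [_ Hsup]]]].
    assert (K := Hsup (scompl q) (H2 q Hq) Hpq).
    assert (Hrq : sle r (scompl q)).
    { intro t; unfold scompl; specialize (Hqr t); unfold scompl in Hqr; lra. }
    specialize (K Hrq s). unfold sadd, scompl, sone in *. lra.
Qed.
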